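(* Suppose $\mathop{\downarrow}$ satisfies invariance, monotonicity, full existence and stationarity. Then for all closed tuples $a,b$ and closed sets $C$ with $C\subseteq a\cap b$, if $a\mathop{\downarrow}_C b$ then $a\mathop{\downarrow}^d_C b$ (and hence $a\mathop{\downarrow}^a_C b$).
   Context: $\mathbb M$ monster model; closed = algebraically closed; $\equiv_C$ = conjugacy under automorphisms fixing $C$ pointwise. Invariance: $A\mathop{\downarrow}_C B$, $\sigma\in\operatorname{Aut}(\mathbb M)$ imply $\sigma(A)\mathop{\downarrow}_{\sigma(C)}\sigma(B)$. Monotonicity: $A\mathop{\downarrow}_C B$, $A_0\subseteq A$, $B_0\subseteq B$ imply $A_0\mathop{\downarrow}_C B_0$. Full existence: for closed $C$, any $B$ and tuple $a$, some $a'\equiv_C a$ has $a'\mathop{\downarrow}_C B$. Stationarity: for closed $C$ and closed tuples $a,a',b$ with $C\subseteq a\cap b$, $a\mathop{\downarrow}_C b$, $a'\mathop{\downarrow}_C b$, $a'\equiv_C a$ imply $ab\equiv_C a'b$. $a\mathop{\downarrow}^d_C b$ iff for every $C$-indiscernible $(b_i)_{i<\omega}$ with $b_0=b$ there is $a'$ with $a'b_i\equiv_C ab$ for all $i$. $A\mathop{\downarrow}^a_C B$ iff $\operatorname{acl}(AC)\cap\operatorname{acl}(BC)=\operatorname{acl}(C)$. *)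

(* Defs.v *)
From Stdlib Require Import Arith List Vectors.Fin.
Set Implicit Arguments.

Record Language := {
  Fsym : Type; Fari : Fsym -> nat;
  Rsym : Type; Rari : Rsym -> nat }.

Record Structure (L : Language) := {
  carrier :> Type;
  finterp : forall f : Fsym L, (Fin.t (Fari L f) -> carrier) -> carrier;
  rinterp : forall r : Rsym L, (Fin.t (Rari L r) -> carrier) -> Prop }.

Inductive term (L : Language) (A : Type) : Type :=
| tvar : nat -> term L A
| tpar : A -> term L A
| tfun : forall f : Fsym L, (Fin.t (Fari L f) -> term L A) -> term L A.

Inductive formula (L : Language) (A : Type) : Type :=
| feq : term L A -> term L A -> formula L A
| frel : forall r : Rsym L, (Fin.t (Rari L r) -> term L A) -> formula L A
| fnot : formula L A -> formula L A
| fand : formula L A -> formula L A -> formula L A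
| fex : nat -> formula L A -> formula L A.

Definition update {X : Type} (v : nat -> X) (n : nat) (x : X) : nat -> X :=
  fun k => if Nat.eqb k n then x else v k.

Fixpoint teval {L : Language} (M : Structure L) (v : nat -> M) (t : term L M) : M :=
  match t with
  | tvar _ _ n => v n
  | tpar _ c => c
  | tfun f args => finterp M f (fun i => teval M v (args i))
  end.

Fixpoint sat {L : Language} (M : Structure L) (v : nat -> M) (phi : formula L M) : Prop :=
  match phi with
  | feq t1 t2 => teval M v t1 = teval M v t2
  | frel r args => rinterp M r (fun i => teval M v (args i))
  | fnot psi => ~ sat M v psi
  | fand p q => sat M v p /\ sat M v q
  | fex n psi => exists x : M, sat M (update v n x) psi
  end.

Fixpoint tparams_in {L : Language} {X : Type} (A : X -> Prop) (t : term L X) : Prop :=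
  match t with
  | tvar _ _ _ => True
  | tpar _ c => A c
  | tfun f args => forall i, tparams_in A (args i)
  end.

Fixpoint params_in {L : Language} {X : Type} (A : X -> Prop) (phi : formula L X) : Prop :=
  match phi with
  | feq t1 t2 => tparams_in A t1 /\ tparams_in A t2
  | frel r args => forall i, tparams_in A (args i)
  | fnot psi => params_in A psi
  | fand p q => params_in A p /\ params_in A q
  | fex _ psi => params_in A psi
  end.

(* a formula phi(x) in one free variable x is evaluated by assigning x to every variable *)
Definition sat1 {L : Language} (M : Structure L) (phi : formula L M) (x : M) : Prop :=
  sat M (fun _ => x) phi.

Definition automorphism {L : Language} (M : Structure L) (s : M -> M) : Prop :=
  (forall x y, s x = s y -> x = y) /\ (forall y, exists x, s x = y) /\
  (forall f (args : Fin.t (Fari L f) -> M), s (finterp M f args) = finterp M f (fun i => s (args i))) /\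
  (forall r (args : Fin.t (Rari L r) -> M), rinterp M r args <-> rinterp M r (fun i => s (args i))).

(* sets are predicates on M; tuples are maps from an index type *)
Definition subset {X : Type} (A B : X -> Prop) : Prop := forall x, A x -> B x.
Definition union {X : Type} (A B : X -> Prop) : X -> Prop := fun x => A x \/ B x.
Definition range {I X : Type} (a : I -> X) : X -> Prop := fun x => exists i, a i = x.
Definition image {X : Type} (s : X -> X) (A : X -> Prop) : X -> Prop :=
  fun y => exists x, A x /\ s x = y.

(* smallness relative to the cardinal of K:  |I| < |K| *)
Definition smallT (K : Type) (I : Type) : Prop :=
  ~ exists f : K -> I, forall x y, f x = f y -> x = y.
Definition smallS {X : Type} (K : Type) (A : X -> Prop) : Prop := smallT K {x : X | A x}.

(* M is a monster model with respect to kappa = |K| *)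
Definition monster {L : Language} (M : Structure L) (K : Type) : Prop :=
  (* kappa > |L| + aleph_0 *)
  smallT K (Fsym L + Rsym L + nat)%type /\
  (* kappa-saturated *)
  (forall (A : M -> Prop) (p : formula L M -> Prop), smallS K A ->
     (forall phi, p phi -> params_in A phi) ->
     (forall l : list (formula L M), (forall phi, In phi l -> p phi) ->
        exists y, forall phi, In phi l -> sat1 M phi y) ->
     exists y, forall phi, p phi -> sat1 M phi y) /\
  (* strongly kappa-homogeneous *)
  (forall (I : Type) (a a' : I -> M), smallT K I ->
     (forall (phi : formula L M) (rho : nat -> I), params_in (fun _ => False) phi ->
        (sat M (fun n => a (rho n)) phi <-> sat M (fun n => a' (rho n)) phi)) ->
     exists s, automorphism M s /\ forall i, s (a i) = a' i).

Definition acl {L : Language} (M : Structure L) (A : M -> Prop) (x : M) : Prop :=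
  exists phi : formula L M, params_in A phi /\ sat1 M phi x /\
    exists l : list M, forall y, sat1 M phi y -> In y l.

Definition closed {L : Language} (M : Structure L) (A : M -> Prop) : Prop :=
  subset (acl M A) A.

Definition closed_tuple {L : Language} (M : Structure L) {I : Type} (a : I -> M) : Prop :=
  closed M (range a).

(* a ≡_C a' : conjugate by an automorphism fixing C pointwise *)
Definition conjC {L : Language} (M : Structure L) (C : M -> Prop) {I : Type} (a a' : I -> M) : Prop :=
  exists s, automorphism M s /\ (forall c, C c -> s c = c) /\ forall i, s (a i) = a' i.

Definition conjC2 {L : Language} (M : Structure L) (C : M -> Prop) {I J : Type}
  (a : I -> M) (b : J -> M) (a' : I -> M) (b' : J -> M) : Prop :=
  exists s, automorphism M s /\ (forall c, C c -> s c = c) /\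
    (forall i, s (a i) = a' i) /\ (forall j, s (b j) = b' j).

Definition indiscernible {L : Language} (M : Structure L) (C : M -> Prop) {J : Type}
  (bs : nat -> J -> M) : Prop :=
  forall (n : nat) (s t : nat -> nat),
    (forall k, s k < s (S k)) -> (forall k, t k < t (S k)) ->
    conjC M C (fun p : {k : nat | k < n} * J => bs (s (proj1_sig (fst p))) (snd p))
              (fun p : {k : nat | k < n} * J => bs (t (proj1_sig (fst p))) (snd p)).

Definition dindep {L : Language} (M : Structure L) (C : M -> Prop) {I J : Type}
  (a : I -> M) (b : J -> M) : Prop :=
  forall bs : nat -> J -> M, indiscernible M C bs -> (forall j, bs 0 j = b j) ->
    exists a' : I -> M, forall i, conjC2 M C a' (bs i) a b.

Definition aindep {L : Language} (M : Structure L) (A C B : M -> Prop) : Prop :=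
  forall x, (acl M (union A C) x /\ acl M (union B C) x) <-> acl M C x.

(* axioms on an abstract independence relation indep A C B  ("A ↓_C B") *)
Definition invariance {L : Language} (M : Structure L) (K : Type)
  (indep : (M -> Prop) -> (M -> Prop) -> (M -> Prop) -> Prop) : Prop :=
  forall A C B s, smallS K A -> smallS K C -> smallS K B -> automorphism M s ->
    indep A C B -> indep (image s A) (image s C) (image s B).

Definition monotonicity {L : Language} (M : Structure L) (K : Type)
  (indep : (M -> Prop) -> (M -> Prop) -> (M -> Prop) -> Prop) : Prop :=
  forall A C B A0 B0, smallS K A -> smallS K C -> smallS K B ->
    indep A C B -> subset A0 A -> subset B0 B -> indep A0 C B0.

Definition full_existence {L : Language} (M : Structure L) (K : Type)
  (indep : (M -> Prop) -> (M -> Prop) -> (M -> Prop) -> Prop) : Prop :=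
  forall (C B : M -> Prop) (I : Type) (a : I -> M),
    smallS K C -> closed M C -> smallS K B -> smallT K I ->
    exists a' : I -> M, conjC M C a' a /\ indep (range a') C B.

Definition stationarity {L : Language} (M : Structure L) (K : Type)
  (indep : (M -> Prop) -> (M -> Prop) -> (M -> Prop) -> Prop) : Prop :=
  forall (C : M -> Prop) (I J : Type) (a a' : I -> M) (b : J -> M),
    smallS K C -> smallT K I -> smallT K J -> closed M C ->
    closed_tuple M a -> closed_tuple M a' -> closed_tuple M b ->
    subset C (range a) -> subset C (range b) ->
    indep (range a) C (range b) -> indep (range a') C (range b) -> conjC M C a' a ->
    conjC2 M C a b a' b.

(* Main.v *)
Require Import Defs.
From Stdlib Require Import Arith Lia Classical ClassicalEpsilon FunctionalExtensionality Cantor.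
From mathcomp Require boolp classical_sets.

Lemma ZLP (T:Type) (t0:T) (R: T->T->Prop) :
  (forall t, R t t) -> (forall r s t, R r s -> R s t -> R r t) ->
  (forall A : T -> Prop, (forall s t, A s -> A t -> R s t \/ R t s) -> exists t, forall s, A s -> R s t) ->
  exists t, forall s, R t s -> R s t.
Proof.
  intros Hr Ht Hc.
  destruct (@classical_sets.ZL_preorder T t0 (fun x y => boolp.asbool (R x y))) as [t Ht0].
  - intros t. rewrite boolp.asboolE. apply Hr.
  - intros r s t. rewrite !boolp.asboolE. apply Ht.
  - intros A HA. destruct (Hc A) as [t Htt].
    + intros s t Hs Htt. unfold classical_sets.total_on in HA. specialize (HA s t Hs Htt). rewrite !boolp.asboolE in HA. exact HA.
    + exists t. intros s Hs. rewrite boolp.asboolE. auto.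
  - exists t. intros s Hs. unfold classical_sets.premaximal in Ht0. specialize (Ht0 s). rewrite !boolp.asboolE in Ht0. auto.
Qed.

Definition inj (X Y : Type) := exists f : X -> Y, forall x y, f x = f y -> x = y.

Lemma inj_trans X Y Z : inj X Y -> inj Y Z -> inj X Z.
Proof. intros [f Hf] [g Hg]. exists (fun x => g (f x)). auto. Qed.

Definition pinj (X Y : Type) (R : X -> Y -> Prop) :=
  (forall x y y', R x y -> R x y' -> y = y') /\ (forall x x' y, R x y -> R x' y -> x = x').

Arguments pinj {X Y}.

Lemma compar X Y : inj X Y \/ inj Y X.
Proof.
  set (T := {R : X -> Y -> Prop | pinj R}).
  assert (H0 : pinj (fun (_:X) (_:Y) => False)) by (split; intros; contradiction).
  destruct (@ZLP T (exist _ _ H0) (fun t s => forall x y, proj1_sig t x y -> proj1_sig s x y))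
    as [[R [HR1 HR2]] Hmax].
  - auto.
  - auto.
  - intros A HA.
    assert (Hu : pinj (fun x y => exists t, A t /\ proj1_sig t x y)).
    { split.
      - intros x y y' [t [At Ht]] [t' [At' Ht']].
        destruct (HA t t' At At') as [H|H].
        + apply H in Ht. destruct t' as [R' [P1 P2]]. simpl in *. eauto.
        + apply H in Ht'. destruct t as [R' [P1 P2]]. simpl in *. eauto.
      - intros x x' y [t [At Ht]] [t' [At' Ht']].
        destruct (HA t t' At At') as [H|H].
        + apply H in Ht. destruct t' as [R' [P1 P2]]. simpl in *. eauto.
        + apply H in Ht'. destruct t as [R' [P1 P2]]. simpl in *. eauto. }
    exists (exist _ _ Hu). intros s As x y Hs. simpl. eauto.
  - simpl in Hmax.
    destruct (classic (forall x, exists y, R x y)) as [Hall|Hn].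
    + left. exists (fun x => proj1_sig (constructive_indefinite_description _ (Hall x))).
      intros x x' E.
      destruct (constructive_indefinite_description _ (Hall x)) as [y Hy].
      destruct (constructive_indefinite_description _ (Hall x')) as [y' Hy'].
      simpl in E. subst. eauto.
    + destruct (classic (forall y, exists x, R x y)) as [Hall|Hn'].
      * right. exists (fun y => proj1_sig (constructive_indefinite_description _ (Hall y))).
        intros y y' E.
        destruct (constructive_indefinite_description _ (Hall y)) as [x Hx].
        destruct (constructive_indefinite_description _ (Hall y')) as [x' Hx'].
        simpl in E. subst. eauto.
      * exfalso.
        apply not_all_ex_not in Hn. destruct Hn as [x0 Hx0].
        apply not_all_ex_not in Hn'. destruct Hn' as [y0 Hy0].
        assert (Hp : pinj (fun x y => R x y \/ (x = x0 /\ y = y0))).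
        { split.
          - intros x y y' H1 H2.
            destruct H1 as [H1|[E1 F1]]; destruct H2 as [H2|[E2 F2]]; subst; eauto;
              exfalso; apply Hx0; eauto.
          - intros x x' y H1 H2.
            destruct H1 as [H1|[E1 F1]]; destruct H2 as [H2|[E2 F2]]; subst; eauto;
              exfalso; apply Hy0; eauto. }
        specialize (Hmax (exist _ _ Hp)). simpl in Hmax.
        assert (R x0 y0) by (apply Hmax; auto).
        apply Hx0; eauto.
Qed.

Lemma to_nat_inj p q : Cantor.to_nat p = Cantor.to_nat q -> p = q.
Proof. intros E. rewrite <- (Cantor.cancel_of_to p), <- (Cantor.cancel_of_to q). congruence. Qed.

Section F2.
Variable A : Type.
Definition good (p : (A -> Prop) * (nat -> A -> A)) :=
  (forall n a, fst p a -> fst p (snd p n a)) /\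
  (forall n m a b, fst p a -> fst p b -> snd p n a = snd p m b -> n = m /\ a = b).
Definition GT := {p | good p}.
Definition Dof (t : GT) := fst (proj1_sig t).
Definition gof (t : GT) := snd (proj1_sig t).
Definition GR (t s : GT) := (forall a, Dof t a -> Dof s a) /\ (forall n a, Dof t a -> gof t n a = gof s n a).

Lemma good0 : good ((fun _ => False), (fun _ a => a)).
Proof. split; simpl; intros; contradiction. Qed.

Lemma GR_chain (A0 : GT -> Prop) : (forall s t, A0 s -> A0 t -> GR s t \/ GR t s) ->
  exists t, forall s, A0 s -> GR s t.
Proof.
  intros HA.
  set (tof a := epsilon (inhabits (exist _ _ good0)) (fun t => A0 t /\ Dof t a)).
  set (DU a := exists t, A0 t /\ Dof t a).
  set (gU n a := gof (tof a) n a).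
  assert (Hs : forall a, DU a -> A0 (tof a) /\ Dof (tof a) a).
  { intros a Ha. exact (epsilon_spec (inhabits (exist _ _ good0)) (fun t => A0 t /\ Dof t a) Ha). }
  assert (Hk : forall s a n, A0 s -> Dof s a -> gof s n a = gU n a).
  { intros s a n As Ds. destruct (Hs a) as [At Dt]. { exists s; auto. }
    unfold gU. destruct (HA s (tof a) As At) as [[H1 H2]|[H1 H2]]; auto.
    symmetry; auto. }
  assert (Hg : good (DU, gU)).
  { split; simpl.
    - intros n a Ha. destruct (Hs a Ha) as [At Dt]. exists (tof a). split; auto.
      unfold gU. destruct (proj2_sig (tof a)) as [G1 G2]. apply G1. exact Dt.
    - intros n m a b Ha Hb E. destruct (Hs a Ha) as [At Dt]. destruct (Hs b Hb) as [Bt Et].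
      destruct (HA (tof a) (tof b) At Bt) as [[H1 H2]|[H1 H2]].
      + rewrite <- (Hk (tof b) a n Bt (H1 _ Dt)) in E. unfold gU in E.
        destruct (proj2_sig (tof b)) as [G1 G2]. exact (G2 n m a b (H1 _ Dt) Et E).
      + rewrite <- (Hk (tof a) b m At (H1 _ Et)) in E. unfold gU in E.
        destruct (proj2_sig (tof a)) as [G1 G2]. exact (G2 n m a b Dt (H1 _ Et) E). }
  exists (exist _ _ Hg). intros s As. split.
  - intros a Ha. exists s. auto.
  - intros n a Ha. apply Hk; auto.
Qed.

Lemma F2 : inj nat A -> inj (nat * A) A.
Proof.
  intros [e He].
  destruct (@ZLP GT (exist _ _ good0) GR) as [[[D g] [G1 G2]] Hmax].
  - intros t; split; auto.
  - intros r s t [H1 H2] [H3 H4]; split; auto.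
    intros n a Ha. rewrite H2 by auto. apply H4; auto.
  - exact GR_chain.
  - simpl in *.
    assert (Claim1 : forall e' : nat -> A, (forall x y, e' x = e' y -> x = y) ->
                     (forall m, ~ D (e' m)) -> False).
    { intros e' He' Hn.
      set (em a := epsilon (inhabits 0) (fun m => e' m = a)).
      set (D' a := D a \/ exists m, e' m = a).
      set (g' n a := match excluded_middle_informative (D a) with
                     | left _ => g n a | right _ => e' (Cantor.to_nat (n, em a)) end).
      assert (Hem : forall m, e' (em (e' m)) = e' m).
      { intros m. exact (epsilon_spec (inhabits 0) (fun k => e' k = e' m) (ex_intro _ m eq_refl)). }
      assert (Hg' : good (D', g')).
      { split; simpl.
        - intros n a Ha. unfold g'. destruct (excluded_middle_informative (D a)).
          + left. auto.
          + right. eauto.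
        - intros n m a b Ha Hb E. unfold g' in E.
          destruct (excluded_middle_informative (D a)) as [Da|Da];
          destruct (excluded_middle_informative (D b)) as [Db|Db].
          + eauto.
          + exfalso. apply (Hn (Cantor.to_nat (m, em b))). rewrite <- E. auto.
          + exfalso. apply (Hn (Cantor.to_nat (n, em a))). rewrite E. auto.
          + destruct Ha as [Ha|[k Hk]]; [contradiction|]. destruct Hb as [Hb|[k' Hk']]; [contradiction|].
            subst a b. apply He' in E. apply to_nat_inj in E. injection E. intros E2 E1.
            split; auto. rewrite <- (Hem k), <- (Hem k'). congruence. }
      assert (HR : GR (exist _ (D, g) (conj G1 G2)) (exist _ _ Hg')).
      { unfold GR, Dof, gof; split; simpl.
        * intros a Ha. left; auto.
        * intros n a Ha. unfold g'. destruct (excluded_middle_informative (D a)); [auto|contradiction]. }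
      destruct (Hmax _ HR) as [H1 H2].
      unfold Dof in H1; simpl in H1. apply (Hn 0). apply H1. right. eauto. }
    assert (Hd0 : exists d0, D d0).
    { apply NNPP. intros Hno. apply (Claim1 e He). intros m Dm. apply Hno. eauto. }
    destruct Hd0 as [d0 Hd0].
    assert (Hh : inj {a | ~ D a} nat).
    { destruct (compar {a | ~ D a} nat) as [H|[f Hf]]; auto.
      exfalso. apply (Claim1 (fun m => proj1_sig (f m))).
      - intros x y E. apply Hf. destruct (f x) as [u pu], (f y) as [v pv]. simpl in E. subst v.
        f_equal. apply proof_irrelevance.
      - intros m. exact (proj2_sig (f m)). }
    destruct Hh as [h Hh].
    exists (fun p : nat * A => let (n, a) := p in
      match excluded_middle_informative (D a) with
      | left _ => g (2 * n) a
      | right H => g (2 * Cantor.to_nat (n, h (exist _ a H)) + 1) d0 end).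
    intros [n a] [m b] E.
    destruct (excluded_middle_informative (D a)) as [Da|Da];
    destruct (excluded_middle_informative (D b)) as [Db|Db].
    + destruct (G2 _ _ _ _ Da Db E) as [E1 E2]. f_equal; [lia|auto].
    + destruct (G2 _ _ _ _ Da Hd0 E) as [E1 E2]. lia.
    + destruct (G2 _ _ _ _ Hd0 Db E) as [E1 E2]. lia.
    + destruct (G2 _ _ _ _ Hd0 Hd0 E) as [E1 E2].
      assert (E3 : Cantor.to_nat (n, h (exist _ a Da)) = Cantor.to_nat (m, h (exist _ b Db))) by lia.
      apply to_nat_inj in E3. injection E3. intros E4 E5. apply Hh in E4.
      apply (f_equal (@proj1_sig _ _)) in E4. simpl in E4. subst; auto.
Qed.
End F2.

Lemma S2 K A : ~inj K nat -> ~inj K A -> ~inj K (nat*A).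
Proof.
  intros HN HA HK. destruct (compar A nat) as [[f Hf]|H].
  - apply HN. eapply inj_trans; [exact HK|].
    exists (fun p => Cantor.to_nat (fst p, f (snd p))).
    intros [n a] [m b] E. apply to_nat_inj in E. injection E. intros E1 E2. apply Hf in E1. subst; auto.
  - apply HA. eapply inj_trans; [exact HK|]. apply F2. exact H.
Qed.

Lemma S1 K A B : ~inj K nat -> ~inj K A -> ~inj K B -> ~inj K (A+B).
Proof.
  intros HN HA HB HK. destruct (compar A B) as [[f Hf]|[f Hf]].
  - apply (@S2 K B HN HB). eapply inj_trans; [exact HK|].
    exists (fun p => match p with inl a => (0, f a) | inr b => (1, b) end).
    intros [a|b] [a'|b'] E; injection E; intros; try discriminate; subst; auto.
    apply Hf in H. subst; auto.
  - apply (@S2 K A HN HA). eapply inj_trans; [exact HK|].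
    exists (fun p => match p with inl a => (0, a) | inr b => (1, f b) end).
    intros [a|b] [a'|b'] E; injection E; intros; try discriminate; subst; auto.
    apply Hf in H. subst; auto.
Qed.
From Stdlib Require Import List PropExtensionality.
Unset Asymmetric Patterns.

Section Mod.
Variable L : Language.
Variable M : Structure L.

Fixpoint tmap (s : M -> M) (t : term L M) : term L M :=
  match t with
  | tvar _ _ n => tvar L M n
  | tpar _ c => tpar L (s c)
  | tfun f args => tfun f (fun i => tmap s (args i))
  end.

Fixpoint fmap (s : M -> M) (phi : formula L M) : formula L M :=
  match phi with
  | feq t1 t2 => feq (tmap s t1) (tmap s t2)
  | frel r args => frel r (fun i => tmap s (args i))
  | fnot psi => fnot (fmap s psi)
  | fand p q => fand (fmap s p) (fmap s q)
  | fex n psi => fex n (fmap s psi)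
  end.

Lemma teval_aut s v t : automorphism M s ->
  s (teval M v t) = teval M (fun n => s (v n)) (tmap s t).
Proof.
  intros Hs. induction t as [n|c|f args IH]; simpl; auto.
  destruct Hs as [_ [_ [Hf _]]]. rewrite Hf. f_equal. apply functional_extensionality. auto.
Qed.

Lemma sat_aut s phi : automorphism M s -> forall v,
  sat M v phi <-> sat M (fun n => s (v n)) (fmap s phi).
Proof.
  intros Hs. induction phi as [t1 t2|r args|psi IH|p IHp q IHq|n psi IH]; intros v; simpl.
  - rewrite <- !teval_aut by auto. destruct Hs as [Hi _]. split; [congruence|auto].
  - pose proof Hs as [_ [_ [_ Hr]]]. rewrite Hr.
    replace (fun i => s (teval M v (args i))) with (fun i => teval M (fun n => s (v n)) (tmap s (args i))).
    + tauto.
    + apply functional_extensionality. intros; rewrite teval_aut; auto.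
  - rewrite IH. tauto.
  - rewrite IHp, IHq. tauto.
  - split.
    + intros [x Hx]. exists (s x). rewrite IH in Hx.
      replace (fun n0 => s (update v n x n0)) with (update (fun n0 => s (v n0)) n (s x)) in Hx; auto.
      apply functional_extensionality; intros k; unfold update; destruct (Nat.eqb k n); auto.
    + intros [y Hy]. destruct Hs as [Hi [Hsu Hr]]. destruct (Hsu y) as [x Hx]. subst y.
      exists x. rewrite IH by (repeat split; auto).
      replace (fun n0 => s (update v n x n0)) with (update (fun n0 => s (v n0)) n (s x)); auto.
      apply functional_extensionality; intros k; unfold update; destruct (Nat.eqb k n); auto.
Qed.

Lemma tparams_map (A : M -> Prop) s t : tparams_in A t -> tparams_in (image s A) (tmap s t).
Proof. induction t; simpl; auto. intros H. exists a. auto. Qed.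

Lemma params_map (A : M -> Prop) s phi : params_in A phi -> params_in (image s A) (fmap s phi).
Proof.
  induction phi; simpl; intuition (auto using tparams_map).
Qed.

Lemma tparams_mono (A B : M -> Prop) (t : term L M) : subset A B -> tparams_in A t -> tparams_in B t.
Proof. intros H. induction t; simpl; auto. Qed.

Lemma params_mono (A B : M -> Prop) (phi : formula L M) : subset A B -> params_in A phi -> params_in B phi.
Proof. intros H. induction phi; simpl; intuition (eauto using tparams_mono). Qed.

Lemma acl_mono (A B : M -> Prop) x : subset A B -> acl M A x -> acl M B x.
Proof. intros H [phi [P [S F]]]. exists phi. split; [eapply params_mono; eauto|auto]. Qed.

Lemma aut_inv s : automorphism M s -> exists s', automorphism M s' /\
  (forall x, s' (s x) = x) /\ (forall y, s (s' y) = y).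
Proof.
  intros Hs. pose proof Hs as [Hi [Hsu [Hf Hr]]].
  set (s' y := proj1_sig (constructive_indefinite_description _ (Hsu y))).
  assert (H1 : forall y, s (s' y) = y).
  { intros y. unfold s'. destruct (constructive_indefinite_description _ (Hsu y)). auto. }
  assert (H2 : forall x, s' (s x) = x) by (intros x; apply Hi; rewrite H1; auto).
  exists s'. split; [|split; auto].
  split; [|split; [|split]].
  - intros x y E. rewrite <- (H1 x), <- (H1 y), E. auto.
  - intros y. exists (s y). auto.
  - intros f args. apply Hi. rewrite H1, Hf. f_equal. apply functional_extensionality. auto.
  - intros r args. rewrite (Hr r (fun i => s' (args i))).
    replace (fun i => s (s' (args i))) with args; [tauto|].
    apply functional_extensionality. auto.
Qed.

Lemma aut_comp s t : automorphism M s -> automorphism M t -> automorphism M (fun x => s (t x)).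
Proof.
  intros [Hi [Hsu [Hf Hr]]] [Ti [Tsu [Tf Tr]]]. split; [|split; [|split]].
  - auto.
  - intros y. destruct (Hsu y) as [z Hz]. destruct (Tsu z) as [x Hx]. exists x. congruence.
  - intros f args. rewrite Tf, Hf. auto.
  - intros r args. rewrite Tr, Hr. tauto.
Qed.

Lemma acl_aut s A x : automorphism M s -> acl M A x -> acl M (image s A) (s x).
Proof.
  intros Hs [phi [P [S [l F]]]]. destruct (aut_inv _ Hs) as [s' [Hs' [K1 K2]]].
  exists (fmap s phi). split; [apply params_map; auto|split].
  - unfold sat1 in *. apply (sat_aut _ _ Hs) in S. exact S.
  - exists (map s l). intros y Hy. unfold sat1 in Hy.
    assert (sat M (fun _ => s (s' y)) (fmap s phi)) by (rewrite K2; auto).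
    apply (sat_aut _ _ Hs (fun _ => s' y)) in H. apply F in H. rewrite <- (K2 y). apply in_map. auto.
Qed.

Lemma closed_aut I (a : I -> M) s : automorphism M s -> closed_tuple M a ->
  closed_tuple M (fun i => s (a i)).
Proof.
  intros Hs Hc x Hx. destruct (aut_inv _ Hs) as [s' [Hs' [K1 K2]]].
  apply (acl_aut _ _ _ Hs') in Hx. eapply acl_mono in Hx.
  - apply Hc in Hx. destruct Hx as [i Hi]. exists i. rewrite Hi. auto.
  - intros y [z [[i Hi] Hz]]. exists i. subst. auto.
Qed.


Fixpoint tsubst (sg : nat -> term L M) (t : term L M) : term L M :=
  match t with
  | tvar _ _ n => sg n
  | tpar _ c => tpar L c
  | tfun f args => tfun f (fun i => tsubst sg (args i))
  end.

Fixpoint fsubst (sg : nat -> term L M) (phi : formula L M) : formula L M :=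
  match phi with
  | feq t1 t2 => feq (tsubst sg t1) (tsubst sg t2)
  | frel r args => frel r (fun i => tsubst sg (args i))
  | fnot psi => fnot (fsubst sg psi)
  | fand p q => fand (fsubst sg p) (fsubst sg q)
  | fex n psi => fex n (fsubst (update sg n (tvar L M n)) psi)
  end.

Lemma teval_subst w sg t : teval M w (tsubst sg t) = teval M (fun m => teval M w (sg m)) t.
Proof.
  induction t as [n|c|f args IH]; simpl; auto. f_equal. apply functional_extensionality. auto.
Qed.

Definition good_sub (sg : nat -> term L M) := forall m, sg m = tvar L M m \/ exists c, sg m = tpar L c.

Lemma sat_subst phi : forall sg w, good_sub sg ->
  (sat M w (fsubst sg phi) <-> sat M (fun m => teval M w (sg m)) phi).
Proof.
  induction phi as [t1 t2|r args|psi IH|p IHp q IHq|n psi IH]; intros sg w Hg; simpl.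
  - rewrite !teval_subst. tauto.
  - replace (fun i => teval M w (tsubst sg (args i))) with (fun i => teval M (fun m => teval M w (sg m)) (args i)); [tauto|].
    apply functional_extensionality; intros; rewrite teval_subst; auto.
  - rewrite IH; tauto.
  - rewrite IHp, IHq; tauto.
  - assert (Hg' : good_sub (update sg n (tvar L M n))).
    { intros m. unfold update. destruct (Nat.eqb m n) eqn:E; auto.
      apply Nat.eqb_eq in E. subst. auto. }
    split; intros [x Hx]; exists x.
    + rewrite IH in Hx by auto.
      replace (update (fun m => teval M w (sg m)) n x) with (fun m => teval M (update w n x) (update sg n (tvar L M n) m)); auto.
      apply functional_extensionality; intros m. unfold update.
      destruct (Nat.eqb m n) eqn:E; simpl; [rewrite Nat.eqb_refl; auto|].
      destruct (Hg m) as [H|[c H]]; rewrite H; simpl; auto. rewrite E. auto.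
    + rewrite IH by auto.
      replace (update (fun m => teval M w (sg m)) n x) with (fun m => teval M (update w n x) (update sg n (tvar L M n) m)) in Hx; auto.
      apply functional_extensionality; intros m. unfold update.
      destruct (Nat.eqb m n) eqn:E; simpl; [rewrite Nat.eqb_refl; auto|].
      destruct (Hg m) as [H|[c H]]; rewrite H; simpl; auto. rewrite E. auto.
Qed.

Lemma tparams_subst (P : M -> Prop) (t : term L M) sg : tparams_in (fun _ => False) t ->
  (forall m, tparams_in P (sg m)) -> tparams_in P (tsubst sg t).
Proof. intros H Hs. induction t; simpl in *; auto. contradiction. Qed.

Lemma params_subst (P : M -> Prop) (phi : formula L M) : forall sg, params_in (fun _ => False) phi ->
  (forall m, tparams_in P (sg m)) -> params_in P (fsubst sg phi).
Proof.
  induction phi; intros sg H Hs; simpl in *; intuition (eauto using tparams_subst).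
  apply IHphi; auto. intros m. unfold update. destruct (Nat.eqb m n); simpl; auto.
Qed.

End Mod.

Arguments good_sub {L M}. Arguments fsubst {L M}. Arguments tsubst {L M}. Arguments fmap {L M}. Arguments tmap {L M}.

Section Main.
Variable L : Language.
Variable M : Structure L.
Variable K : Type.

Lemma small_nat : monster M K -> ~ inj K nat.
Proof.
  intros [Hk _] H. apply Hk. eapply inj_trans; [exact H|].
  exists (fun n => inr n). intros x y E. injection E; auto.
Qed.

Lemma small_unit : ~ inj K nat -> ~ inj K unit.
Proof. intros HN H. apply HN. eapply inj_trans; [exact H|]. exists (fun _ => 0). intros [] []; auto. Qed.

Lemma small_option X : ~ inj K nat -> ~ inj K X -> ~ inj K (option X).
Proof.
  intros HN HX H. apply (@S1 K X unit HN HX (small_unit HN)). eapply inj_trans; [exact H|].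
  exists (fun o => match o with Some c => inl c | None => inr tt end).
  intros [a|] [b|] E; try discriminate; auto. injection E; intros; subst; auto.
Qed.

Lemma fixed_acl (C : M -> Prop) x : monster M K -> smallS K C ->
  (forall s, automorphism M s -> (forall c, C c -> s c = c) -> s x = x) -> acl M C x.
Proof.
  intros Hm HC Hfix. apply NNPP; intro Hn.
  pose proof (small_nat Hm) as HN.
  destruct Hm as [_ [Hsat Hhom]].
  set (p := fun phi : formula L M => (params_in C phi /\ sat1 M phi x) \/ phi = fnot (feq (tvar L M 0) (tpar L x))).
  assert (HA : smallS K (fun y => C y \/ y = x)).
  { intros H. apply (@S1 K {c | C c} unit HN HC (small_unit HN)). eapply inj_trans; [exact H|].
    exists (fun y => match excluded_middle_informative (C (proj1_sig y)) with
                     | left H => inl (exist _ _ H) | right _ => inr tt end).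
    intros [y Hy] [z Hz] E. simpl in E.
    destruct (excluded_middle_informative (C y)) as [Cy|Cy];
    destruct (excluded_middle_informative (C z)) as [Cz|Cz]; try discriminate.
    - injection E; intros; subst. f_equal; apply proof_irrelevance.
    - assert (y = z) by (destruct Hy; destruct Hz; try contradiction; congruence).
      subst. f_equal; apply proof_irrelevance. }
  assert (Hconj : forall l, (forall phi, In phi l -> p phi) -> exists psi, params_in C psi /\ sat1 M psi x /\
            forall y, sat1 M psi y -> y <> x -> forall phi, In phi l -> sat1 M phi y).
  { induction l as [|phi l IH]; intros Hl.
    - exists (feq (tvar L M 0) (tvar L M 0)). simpl. unfold sat1. simpl. intuition.
    - destruct IH as [psi [P1 [P2 P3]]]. { intros; apply Hl; simpl; auto. }
      destruct (Hl phi (or_introl eq_refl)) as [[Q1 Q2]|Q].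
      + exists (fand phi psi). simpl. unfold sat1 in *. simpl. split; [auto|split; [auto|]].
        intros y [H1 H2] Hy phi0 [E|E]; [subst; auto|]. apply P3; auto.
      + exists psi. split; [auto|split; [auto|]].
        intros y Hy Hyx phi0 [E|E]; [|apply P3; auto]. subst. unfold sat1. simpl. auto. }
  destruct (Hsat (fun y => C y \/ y = x) p HA) as [x' Hx'].
  - intros phi [[H1 H2]|H].
    + eapply params_mono; [|exact H1]. intros y Hy; left; auto.
    + subst. simpl. auto.
  - intros l Hl. destruct (Hconj l Hl) as [psi [P1 [P2 P3]]].
    destruct (classic (exists y, sat1 M psi y /\ y <> x)) as [[y [Hy1 Hy2]]|Hno].
    + exists y. apply P3; auto.
    + exfalso. apply Hn. exists psi. split; [auto|split; [auto|]].
      exists (x :: nil). intros y Hy. left. apply NNPP. intros Hne. apply Hno. eauto.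
  - assert (Hxx : x' <> x).
    { assert (H := Hx' (fnot (feq (tvar L M 0) (tpar L x))) (or_intror eq_refl)). exact H. }
    assert (Hiff : forall psi, params_in C psi -> (sat1 M psi x <-> sat1 M psi x')).
    { intros psi Hp. split; intros H.
      - apply Hx'. left; auto.
      - apply NNPP. intros H2. assert (H3 : sat1 M (fnot psi) x') by (apply Hx'; left; split; auto).
        apply H3. exact H. }
    set (a := fun o : option {c | C c} => match o with Some c => proj1_sig c | None => x end).
    set (a' := fun o : option {c | C c} => match o with Some c => proj1_sig c | None => x' end).
    destruct (Hhom (option {c | C c}) a a' (small_option _ HN HC)) as [s [Hs Hsa]].
    + intros phi rho Hp.
      set (sg := fun m => match rho m with Some c => tpar L (proj1_sig c) | None => tvar L M m end).
      assert (Hg : good_sub sg).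
      { intros m. unfold sg. destruct (rho m); eauto. }
      assert (Hps : params_in C (fsubst sg phi)).
      { apply params_subst; auto. intros m. unfold sg. destruct (rho m) as [[c Hc]|]; simpl; auto. }
      assert (E1 : (fun m => teval M (fun _ => x) (sg m)) = (fun n => a (rho n))).
      { apply functional_extensionality; intros m. unfold sg, a. destruct (rho m); auto. }
      assert (E2 : (fun m => teval M (fun _ => x') (sg m)) = (fun n => a' (rho n))).
      { apply functional_extensionality; intros m. unfold sg, a'. destruct (rho m); auto. }
      rewrite <- E1, <- E2, <- !sat_subst by auto. apply Hiff. auto.
    + apply Hxx. pose proof (Hsa None) as HsN. simpl in HsN. rewrite <- HsN. apply Hfix; auto.
      intros c Hc. exact (Hsa (Some (exist _ c Hc))).
Qed.
End Main.

Section Thm.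
Variable L : Language.
Variable M : Structure L.
Variable K : Type.

Lemma smallS_range I (a : I -> M) : ~ inj K I -> smallS K (range a).
Proof.
  intros HI [f Hf]. apply HI.
  exists (fun k => proj1_sig (constructive_indefinite_description _ (proj2_sig (f k)))).
  intros x y E. apply Hf.
  destruct (constructive_indefinite_description _ (proj2_sig (f x))) as [i Hi].
  destruct (constructive_indefinite_description _ (proj2_sig (f y))) as [j Hj].
  simpl in E. subst j. destruct (f x) as [u pu], (f y) as [v pv]. simpl in *. subst.
  f_equal. apply proof_irrelevance.
Qed.

Lemma pred_ext (P Q : M -> Prop) : (forall x, P x <-> Q x) -> P = Q.
Proof. intros H. apply functional_extensionality. intros x. apply propositional_extensionality. auto. Qed.

Lemma image_range I (a : I -> M) s : image s (range a) = range (fun i => s (a i)).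
Proof.
  apply pred_ext. intros y. split.
  - intros [x [[i Hi] E]]. exists i. subst. auto.
  - intros [i Hi]. exists (a i). split; [exists i; auto|auto].
Qed.

Lemma image_fix (C : M -> Prop) s : (forall c, C c -> s c = c) -> image s C = C.
Proof.
  intros H. apply pred_ext. intros y. split.
  - intros [x [Cx E]]. rewrite H in E by auto. subst. auto.
  - intros Cy. exists y. auto.
Qed.

Lemma inv_fix (C : M -> Prop) s s' : (forall c, C c -> s c = c) -> (forall x, s' (s x) = x) ->
  forall c, C c -> s' c = c.
Proof. intros H1 H2 c Hc. rewrite <- (H1 c Hc) at 1. auto. Qed.

Lemma transport indep I J (a : I -> M) (b : J -> M) C s :
  invariance M K indep -> ~ inj K I -> ~ inj K J -> smallS K C ->
  automorphism M s -> (forall c, C c -> s c = c) ->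
  closed_tuple M a -> closed_tuple M b -> subset C (range a) -> subset C (range b) ->
  indep (range a) C (range b) ->
  closed_tuple M (fun i => s (a i)) /\ closed_tuple M (fun j => s (b j)) /\
  subset C (range (fun i => s (a i))) /\ subset C (range (fun j => s (b j))) /\
  indep (range (fun i => s (a i))) C (range (fun j => s (b j))).
Proof.
  intros Hinv HI HJ HC Hs Hf Ha Hb HCa HCb Hab.
  split; [apply closed_aut; auto|]. split; [apply closed_aut; auto|].
  split; [|split].
  - intros c Hc. destruct (HCa c Hc) as [i Hi]. exists i. rewrite Hi. auto.
  - intros c Hc. destruct (HCb c Hc) as [i Hi]. exists i. rewrite Hi. auto.
  - rewrite <- !image_range. rewrite <- (image_fix C s Hf).
    apply Hinv; auto using smallS_range.
Qed.

Lemma closed_conj I (a a' : I -> M) t : automorphism M t -> (forall k, t (a' k) = a k) ->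
  closed_tuple M a -> closed_tuple M a'.
Proof.
  intros Ht Hta Ha. destruct (aut_inv _ _ _ Ht) as [t' [Ht' [K1 K2]]].
  replace a' with (fun k => t' (a k)).
  - apply closed_aut; auto.
  - apply functional_extensionality. intros k. rewrite <- Hta. auto.
Qed.

End Thm.

Theorem lemma7p15 (L : Language) (M : Structure L) (K : Type)
  (indep : (M -> Prop) -> (M -> Prop) -> (M -> Prop) -> Prop) :
  monster M K ->
  invariance M K indep -> monotonicity M K indep ->
  full_existence M K indep -> stationarity M K indep ->
  forall (I J : Type) (a : I -> M) (b : J -> M) (C : M -> Prop),
    smallT K I -> smallT K J -> smallS K C ->
    closed_tuple M a -> closed_tuple M b -> closed M C ->
    subset C (range a) -> subset C (range b) ->
    indep (range a) C (range b) ->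
    dindep M C a b /\ aindep M (range a) C (range b).
Proof.
  intros Hm Hinv Hmon Hfe Hst I J a b C HI HJ HC Hca Hcb HCc HCa HCb Hab.
  pose proof (small_nat _ _ _ Hm) as HN.
  split.
  - intros bs Hind Hb0.
    assert (Hbi : forall i, exists sg, automorphism M sg /\ (forall c, C c -> sg c = c) /\
                   forall j, sg (b j) = bs i j).
    { intros i. destruct (Hind 1 (fun k => k) (fun k => i + k)) as [sg [Hs [Hf Hsg]]]; try (intros; lia).
      exists sg. split; [auto|split; [auto|]]. intros j.
      assert (H0 : 0 < 1) by lia.
      specialize (Hsg (exist _ 0 H0, j)). simpl in Hsg. rewrite Hb0, Nat.add_0_r in Hsg. auto. }
    set (U := range (fun p : nat * J => bs (fst p) (snd p))).
    assert (HU : smallS K U) by (apply smallS_range; apply S2; auto).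
    destruct (Hfe C U I a HC HCc HU HI) as [a1 [[t [Ht [Htf Hta]]] Ha1]].
    assert (Hs1 : smallS K (range a1)) by (apply smallS_range; auto).
    assert (Hc1 : closed_tuple M a1) by (eapply closed_conj; eauto).
    exists a1. intros i. destruct (Hbi i) as [sg [Hs [Hf Hsg]]].
    destruct (transport _ _ _ _ _ _ _ _ _ _ Hinv HI HJ HC Hs Hf Hca Hcb HCa HCb Hab) as [T1 [T2 [T3 [T4 T5]]]].
    replace (fun j => sg (b j)) with (bs i) in T2, T4, T5 by (apply functional_extensionality; auto).
    assert (Hmi : indep (range a1) C (range (bs i))).
    { apply (Hmon (range a1) C U); auto.
      - intros x Hx; auto.
      - intros x [j Hj]. exists (i, j). auto. }
    destruct (Hst C I J (fun k => sg (a k)) a1 (bs i) HC HI HJ HCc T1 Hc1 T2 T3 T4 T5 Hmi)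
      as [th [Hth [Hthf [Hth1 Hth2]]]].
    { exists (fun x => sg (t x)). split; [apply aut_comp; auto|split].
      - intros c Hc. rewrite Htf, Hf; auto.
      - intros k. rewrite Hta. auto. }
    destruct (aut_inv _ _ _ Hth) as [th' [Hth' [P1 P2]]].
    destruct (aut_inv _ _ _ Hs) as [sg' [Hs' [Q1 Q2]]].
    exists (fun x => sg' (th' x)). split; [apply aut_comp; auto|split; [|split]].
    + intros c Hc. rewrite (inv_fix _ _ _ _ _ Hthf P1) by auto. apply (inv_fix _ _ _ _ _ Hf Q1); auto.
    + intros k. rewrite <- Hth1, P1, Q1. auto.
    + intros j. rewrite <- (Hth2 j) at 1. rewrite P1, <- Hsg, Q1. auto.
  - intros x. split.
    + intros [H1 H2].
      assert (Hxa : range a x).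
      { apply Hca. eapply acl_mono; [|exact H1]. intros y [Hy|Hy]; auto. }
      assert (Hxb : range b x).
      { apply Hcb. eapply acl_mono; [|exact H2]. intros y [Hy|Hy]; auto. }
      destruct Hxa as [i0 Ei]. destruct Hxb as [j0 Ej].
      apply (fixed_acl _ _ _ _ x Hm HC). intros sg Hs Hf.
      destruct (transport _ _ _ _ _ _ _ _ _ _ Hinv HI HJ HC Hs Hf Hca Hcb HCa HCb Hab) as [T1 [T2 [T3 [T4 T5]]]].
      set (U := range (fun p : J + J => match p with inl j => b j | inr j => sg (b j) end)).
      assert (HU : smallS K U) by (apply smallS_range; apply S1; auto).
      destruct (Hfe C U I a HC HCc HU HI) as [a1 [[t [Ht [Htf Hta]]] Ha1]].
      assert (Hs1 : smallS K (range a1)) by (apply smallS_range; auto).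
      assert (Hc1 : closed_tuple M a1) by (eapply closed_conj; eauto).
      assert (Hm1 : indep (range a1) C (range b)).
      { apply (Hmon (range a1) C U); auto.
        - intros y Hy; auto.
        - intros y [j Hj]. exists (inl j). auto. }
      assert (Hm2 : indep (range a1) C (range (fun j => sg (b j)))).
      { apply (Hmon (range a1) C U); auto.
        - intros y Hy; auto.
        - intros y [j Hj]. exists (inr j). auto. }
      destruct (Hst C I J a a1 b HC HI HJ HCc Hca Hc1 Hcb HCa HCb Hab Hm1)
        as [th [Hth [Hthf [Hth1 Hth2]]]].
      { exists t. auto. }
      destruct (Hst C I J (fun k => sg (a k)) a1 (fun j => sg (b j)) HC HI HJ HCc T1 Hc1 T2 T3 T4 T5 Hm2)
        as [th2 [Hth2' [Hthf2 [Hth21 Hth22]]]].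
      { exists (fun x => sg (t x)). split; [apply aut_comp; auto|split].
        - intros c Hc. rewrite Htf, Hf; auto.
        - intros k. rewrite Hta. auto. }
      assert (E1 : a1 i0 = x).
      { rewrite <- Hth1, Ei, <- Ej, Hth2. auto. }
      assert (E2 : a1 i0 = sg x).
      { rewrite <- Hth21. simpl. rewrite Ei, <- Ej, Hth22. auto. }
      congruence.
    + intros H. split; eapply acl_mono; try exact H; intros y Hy; right; auto.
Qed.
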